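(* Let $m=rn$. There is a bijection between ordered pairs $(P,Q)$ of standard Young tableaux of the same shape, both in $T([m];d)$ and both satisfying Condition (T), and walks in $\widetilde W(d,2m;\vec 0)$ staying in the region $\{x_1\ge x_2\ge\cdots\ge x_d\}$. (Explicitly: if $c_1\cdots c_m$ and $c'_1\cdots c'_m$ are the column-index sequences of $P$ and $Q$, where $c_i$ is the column of $P$ containing $i$, the pair corresponds to the walk $c_1\cdots c_m\,|\,c'_m\cdots c'_1$.)
   Context: $n,r,d\ge1$, $m=rn$. $T([m];d)$ is the set of standard Young tableaux with entries exactly $1,\dots,m$ and at most $d$ columns; row $i$ is above row $i+1$. Condition (T): for each $i\in[n]$ and $1\le s<r$, the row containing $r(i-1)+s$ is strictly above the row containing $r(i-1)+s+1$. A walk $a_1\cdots a_m|b_1\cdots b_m$ ($a_i,b_i\in[d]$) denotes the walk in $\mathbb Z^d$ from the origin with steps $e_{a_1},\dots,e_{a_m},-e_{b_1},\dots,-e_{b_m}$. $W'(d,2m;\vec 0)$ is the set of such walks ending at the origin with $a_{r(i-1)+s}\ge a_{r(i-1)+s+1}$ and $b_{r(i-1)+s}\ge b_{r(i-1)+s+1}$ for all $i\in[n]$, $1\le s<r$. For $w=a_1\cdots a_m|b_1\cdots b_m$, $\tilde w=a_1\cdots a_m|b_m\cdots b_1$, and $\widetilde W(d,2m;\vec0)=\{\tilde w:w\in W'(d,2m;\vec0)\}$. A walk stays in a region if all visited points lie in it. *)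

(* Defs.v *)
From mathcomp Require Import all_boot all_order all_algebra.
Set Implicit Arguments. Unset Strict Implicit. Unset Printing Implicit Defensive.

(* A tableau is the list of its rows, top row first (row 0 is the top row);
   each row lists its entries from left to right. *)
Definition tableau := seq (seq nat).

Definition shape (T : tableau) : seq nat := map size T.

Definition is_SYT (m : nat) (T : tableau) : Prop :=
  [/\ all (fun row => 0 < size row) T,
      sorted geq (shape T),
      perm_eq (flatten T) (iota 1 m),
      all (sorted ltn) T
    & forall i j, j < size (nth [::] T i.+1) ->
        nth 0 (nth [::] T i) j < nth 0 (nth [::] T i.+1) j].

Definition in_T (m d : nat) (T : tableau) : Prop :=
  is_SYT m T /\ all (fun row => size row <= d) T.

(* Row index (0 = top) and column index (1-based, in [d]) of entry k. *)
Definition rowof (T : tableau) (k : nat) : nat := find (fun row => k \in row) T.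
Definition colof (T : tableau) (k : nat) : nat :=
  (index k (nth [::] T (rowof T k))).+1.

Definition colseq (m : nat) (T : tableau) : seq nat := map (colof T) (iota 1 m).

Definition condT (n r : nat) (T : tableau) : Prop :=
  forall i s, 1 <= i <= n -> 1 <= s < r ->
    rowof T (r * (i - 1) + s) < rowof T (r * (i - 1) + s + 1).

(* A walk a_1..a_m | b_1..b_m is the pair (a, b). *)
Definition walk := (seq nat * seq nat)%type.

(* Its list of steps: (j, true) = +e_j, (j, false) = -e_j. *)
Definition steps (w : walk) : seq (nat * bool) :=
  [seq (x, true) | x <- w.1] ++ [seq (x, false) | x <- w.2].

Definition coord (s : seq (nat * bool)) (j : nat) : int :=
  (count (fun st => (st.1 == j) && st.2) s)%:Z
  - (count (fun st => (st.1 == j) && ~~ st.2) s)%:Z.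

(* 1-indexed entry of a sequence. *)
Definition ent (a : seq nat) (k : nat) : nat := nth 0 a k.-1.

Definition block_decr (n r : nat) (a : seq nat) : Prop :=
  forall i s, 1 <= i <= n -> 1 <= s < r ->
    ent a (r * (i - 1) + s + 1) <= ent a (r * (i - 1) + s).

Definition in_W' (n r d m : nat) (w : walk) : Prop :=
  [/\ size w.1 = m /\ size w.2 = m,
      all (fun x => 1 <= x <= d) w.1, all (fun x => 1 <= x <= d) w.2,
      (forall j, coord (steps w) j = 0)
    & block_decr n r w.1 /\ block_decr n r w.2].

Definition tilde (w : walk) : walk := (w.1, rev w.2).

Definition in_Wtilde (n r d m : nat) (w : walk) : Prop :=
  exists w', in_W' n r d m w' /\ w = tilde w'.

Definition stays_in_chamber (d : nat) (w : walk) : Prop :=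
  forall k, k <= size (steps w) ->
    forall j, 1 <= j < d ->
      (coord (take k (steps w)) j.+1 <= coord (take k (steps w)) j)%R.

Definition good_pair (n r d m : nat) (P Q : tableau) : Prop :=
  [/\ in_T m d P, in_T m d Q, shape P = shape Q, condT n r P & condT n r Q].

Definition good_walk (n r d m : nat) (w : walk) : Prop :=
  in_Wtilde n r d m w /\ stays_in_chamber d w.

Definition corr (m : nat) (P Q : tableau) : walk := (colseq m P, rev (colseq m Q)).

(* Main.v *)
Require Import Defs.
From mathcomp Require Import all_boot all_order all_algebra zify.
Set Implicit Arguments. Unset Strict Implicit. Unset Printing Implicit Defensive.

Lemma sorted_nth_count (T : eqType) (x0 : T) (r : rel T) (P : pred T) s i :
  transitive r -> sorted r s -> {in s &, forall a b, r a b -> P b -> P a} ->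
  i < size s -> P (nth x0 s i) = (i < count P s).
Proof.
move=> rT; elim: s i => [|a s IH] i //= Hs Hc Hi.
have Hs' : sorted r s by apply: path_sorted Hs.
have Hall : all (r a) s by apply: order_path_min.
have Hc' : {in s &, forall a b, r a b -> P b -> P a}.
  by move=> x y xs ys; apply: Hc; rewrite inE ?xs ?ys orbT.
case: i Hi => [|i] Hi /=.
  case Pa: (P a) => //=.
  have -> : count P s = 0.
    apply/eqP; rewrite -leqn0 leqNgt -has_count; apply/hasP => -[b bs Pb].
    by move: Pa; rewrite (Hc a b) ?inE ?eqxx ?bs ?orbT //; apply: (allP Hall).
  by [].
rewrite IH //.
case Pa: (P a) => //=.
have -> : count P s = 0.
  apply/eqP; rewrite -leqn0 leqNgt -has_count; apply/hasP => -[b bs Pb].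
  by move: Pa; rewrite (Hc a b) ?inE ?eqxx ?bs ?orbT //; apply: (allP Hall).
by [].
Qed.

Lemma find_eq (T : Type) (x0 : T) (P : pred T) s i :
  i < size s -> P (nth x0 s i) -> (forall k, k < i -> ~~ P (nth x0 s k)) ->
  find P s = i.
Proof.
elim: s i => [|a s IH] [|i] //= Hi Pi Hb.
  by rewrite Pi.
have := Hb 0 isT => /= /negbTE ->; congr S; apply: IH => // k Hk.
exact: (Hb k.+1).
Qed.

Lemma count_iota_le s d : s <= d -> count (fun j => j <= s) (iota 1 d) = s.
Proof.
move=> Hsd; rewrite -(subnKC Hsd) iotaD count_cat.
rewrite (eq_in_count (a2 := predT)); last by move=> x; rewrite mem_iota /=; lia.
rewrite count_predT size_iota (eq_in_count (a2 := pred0)) ?count_pred0 ?addn0 //.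
by move=> x; rewrite mem_iota /=; lia.
Qed.

Lemma count_iota_prefix (P : pred nat) d :
  (forall a b, 0 < a -> a <= b -> b <= d -> P b -> P a) ->
  forall j, 0 < j <= d -> P j = (j <= count P (iota 1 d)).
Proof.
move=> Hc j Hj.
have Hs : sorted ltn (iota 1 d) by apply: iota_ltn_sorted.
have := @sorted_nth_count _ 0 ltn P (iota 1 d) j.-1 ltn_trans Hs.
rewrite nth_iota; last lia.
have -> : 1 + j.-1 = j by lia.
move=> -> //; last by rewrite size_iota; lia.
  by case: j Hj.
move=> a b; rewrite !mem_iota => Ha Hb ab; apply: Hc; lia.
Qed.

Definition cnt (c : seq nat) j := count (pred1 j) c.
Definition cols (c : seq nat) (j : nat) : seq nat :=
  [seq x <- iota 1 (size c) | ent c x == j].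

Lemma map_ent_iota c k : k <= size c -> map (ent c) (iota 1 k) = take k c.
Proof.
move=> Hk; rewrite -(map_nth_iota0 0 Hk) (iotaDl 1 0) -map_comp.
by apply: eq_map => x.
Qed.

Lemma size_cols c j : size (cols c j) = cnt c j.
Proof.
by rewrite size_filter -(count_map (ent c) (pred1 j)) map_ent_iota // take_size.
Qed.

Lemma cols_count c j k :
  count (fun x => x <= k) (cols c j) = cnt (take k c) j.
Proof.
rewrite count_filter.
case: (leqP k (size c)) => Hk.
  rewrite -(subnKC Hk) iotaD count_cat.
  rewrite (eq_in_count (a1 := predI _ _) (a2 := fun x => ent c x == j)); last first.
    by move=> x; rewrite mem_iota /= => Hx; have -> : x <= k by lia.
  rewrite (eq_in_count (a1 := predI _ _) (a2 := pred0)); last first.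
    by move=> x; rewrite mem_iota /= => Hx; have -> : x <= k = false by lia.
  rewrite count_pred0 addn0 -(count_map (ent c) (pred1 j)) map_ent_iota //.
rewrite take_oversize ?(ltnW Hk) //.
rewrite (eq_in_count (a1 := predI _ _) (a2 := fun x => ent c x == j)); last first.
  by move=> x; rewrite mem_iota /= => Hx; have -> : x <= k by lia.
by rewrite -(count_map (ent c) (pred1 j)) map_ent_iota // take_size.
Qed.

Lemma mem_cols c j x : (x \in cols c j) = (0 < x <= size c) && (ent c x == j).
Proof. by rewrite mem_filter mem_iota andbC; congr (_ && _); lia. Qed.

Lemma sorted_cols c j : sorted ltn (cols c j).
Proof. by apply: sorted_filter; [exact: ltn_trans | exact: iota_ltn_sorted]. Qed.

Lemma nth_cols_mem c j i : i < cnt c j -> nth 0 (cols c j) i \in cols c j.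
Proof. by move=> Hi; apply: mem_nth; rewrite size_cols. Qed.

Lemma nth_cols_prop c j i : i < cnt c j ->
  0 < nth 0 (cols c j) i <= size c /\ ent c (nth 0 (cols c j) i) = j.
Proof. by move/(nth_cols_mem (c:=c)); rewrite mem_cols => /andP[-> /eqP]. Qed.

Lemma nth_cols_le c j i k : i < cnt c j ->
  (nth 0 (cols c j) i <= k) = (i < cnt (take k c) j).
Proof.
move=> Hi; rewrite -cols_count.
apply: (@sorted_nth_count _ 0 ltn (fun x => x <= k)) => //.
  exact: ltn_trans.
  exact: sorted_cols.
  by move=> a b _ _ /= ab bk; apply: leq_trans bk; apply: ltnW.
by rewrite size_cols.
Qed.

Lemma sorted_map_iota (T : Type) (r : rel T) (f : nat -> T) a n :
  (forall k, a <= k -> k.+1 < a + n -> r (f k) (f k.+1)) ->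
  sorted r (map f (iota a n)).
Proof.
elim: n a => [|n IH] a //= H.
case: n IH H => [|n] IH H //=.
have := IH a.+1 => /=; move=> -> ; last by move=> k Hk1 Hk2; apply: H; lia.
by rewrite H //; lia.
Qed.

Lemma mem_flatten_nth (T : eqType) (ss : seq (seq T)) x :
  (x \in flatten ss) <-> exists k, x \in nth [::] ss k.
Proof.
split.
  by move/flattenP => [s sin xs]; exists (index s ss); rewrite nth_index.
move=> [k xk]; apply/flattenP.
case: (ltnP k (size ss)) => Hk.
  by exists (nth [::] ss k) => //; apply: mem_nth.
by move: xk; rewrite nth_default.
Qed.

Lemma flatten_uniqP (T : eqType) (ss : seq (seq T)) :
  uniq (flatten ss) <->
  (forall i, uniq (nth [::] ss i)) /\
  (forall i i' x, x \in nth [::] ss i -> x \in nth [::] ss i' -> i = i').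
Proof.
elim: ss => [|a ss IH] /=.
  by split=> // _; split=> [i|i i' x]; rewrite nth_nil.
rewrite cat_uniq; split.
  move=> /and3P[ua hn uf]; have [IH1 IH2] := IH.1 uf.
  split; first by case.
  have Hno : forall k x, x \in a -> x \in nth [::] ss k -> False.
    move=> k x xa xk; move/hasP: hn; apply; exists x => //.
    by apply/mem_flatten_nth; exists k.
  case=> [|i] [|i'] x //= H1 H2.
  - by case: (Hno _ _ H1 H2).
  - by case: (Hno _ _ H2 H1).
  - by rewrite (IH2 _ _ _ H1 H2).
move=> [H1 H2]; apply/and3P; split.
- exact: (H1 0).
- apply/hasP => -[x /mem_flatten_nth [k xk] xa].
  by have := H2 0 k.+1 x xa xk.
- apply/IH; split; first by move=> i; exact: (H1 i.+1).
  by move=> i i' x Hi Hi'; have := H2 i.+1 i'.+1 x Hi Hi'; case.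
Qed.

Lemma syt_uniq m T : is_SYT m T -> uniq (flatten T).
Proof. by case=> _ _ Hp _ _; rewrite (perm_uniq Hp) iota_uniq. Qed.

Lemma syt_mem m T x : is_SYT m T -> (x \in flatten T) = (0 < x <= m).
Proof. by case=> _ _ Hp _ _; rewrite (perm_mem Hp) mem_iota; lia. Qed.

Lemma syt_row_unique m T i i' x : is_SYT m T ->
  x \in nth [::] T i -> x \in nth [::] T i' -> i = i'.
Proof. by move/syt_uniq/flatten_uniqP => [_ H]; apply: H. Qed.

Lemma syt_row_sorted m T i : is_SYT m T -> sorted ltn (nth [::] T i).
Proof.
case=> _ _ _ Hr _; case: (ltnP i (size T)) => Hi.
  by apply: (allP Hr); apply: mem_nth.
by rewrite nth_default.
Qed.

Lemma syt_pos m T x : is_SYT m T -> x \in flatten T ->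
  [/\ rowof T x < size T, (colof T x).-1 < size (nth [::] T (rowof T x))
    & nth 0 (nth [::] T (rowof T x)) (colof T x).-1 = x].
Proof.
move=> H /flattenP [s sT xs].
have hs : has (fun row => x \in row) T by apply/hasP; exists s.
have Hx : x \in nth [::] T (rowof T x) by apply: (nth_find [::] hs).
split; first by rewrite /rowof -has_find.
  by rewrite /colof /= index_mem.
by rewrite /colof /= nth_index.
Qed.

Lemma syt_at m T i p : is_SYT m T -> i < size T -> p < size (nth [::] T i) ->
  rowof T (nth 0 (nth [::] T i) p) = i /\ colof T (nth 0 (nth [::] T i) p) = p.+1.
Proof.
move=> H Hi Hp.
have Hx : nth 0 (nth [::] T i) p \in nth [::] T i by apply: mem_nth.
have Hr : rowof T (nth 0 (nth [::] T i) p) = i.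
  rewrite /rowof; apply: (@find_eq _ [::]) => // k Hk; apply/negP => Hk'.
  by have := syt_row_unique H Hk' Hx; lia.
split => //; rewrite /colof Hr index_uniq //.
apply: (sorted_uniq ltn_trans ltnn); exact: syt_row_sorted H.
Qed.

Lemma syt_shape m T i i' : is_SYT m T -> i <= i' -> i' < size T ->
  size (nth [::] T i') <= size (nth [::] T i).
Proof.
case=> _ Hs _ _ _ Hii Hi'.
have gt : transitive geq by move=> a b c; rewrite /geq /=; lia.
have gr : reflexive geq by move=> a; rewrite /geq /=.
have := @sorted_leq_nth _ geq gt gr 0 _ Hs i i'.
rewrite !inE /shape size_map !(nth_map [::]) //; last lia.
by apply => //; lia.
Qed.

Lemma syt_col m T i i' p : is_SYT m T -> i < i' -> i' < size T ->
  p < size (nth [::] T i') ->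
  nth 0 (nth [::] T i) p < nth 0 (nth [::] T i') p.
Proof.
move=> H Hii'; have [_ _ _ _ Hcol] := H.
have Hk := subnKC Hii'; move: (i' - i.+1) Hk => k <-.
elim: k => [|k IH] Hs Hp; first by rewrite addn0 in Hp *; apply: Hcol.
have Hp' : p < size (nth [::] T (i.+1 + k)).
  apply: (leq_trans Hp); apply: (syt_shape H) => //; lia.
apply: (ltn_trans (IH _ Hp')); first lia.
by rewrite addnS; apply: Hcol; rewrite -addnS.
Qed.

Lemma syt_col_le m T i i' p : is_SYT m T -> i <= i' -> i' < size T ->
  p < size (nth [::] T i') ->
  nth 0 (nth [::] T i) p <= nth 0 (nth [::] T i') p.
Proof.
move=> H; rewrite leq_eqVlt => /orP[/eqP -> //|Hlt] Hs Hp.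
by apply: ltnW; apply: (syt_col H).
Qed.

Lemma syt_row m T i p q : is_SYT m T -> p < q -> q < size (nth [::] T i) ->
  nth 0 (nth [::] T i) p < nth 0 (nth [::] T i) q.
Proof.
move=> H Hpq Hq.
apply: (sorted_ltn_nth ltn_trans 0 (syt_row_sorted i H)); rewrite ?inE //; lia.
Qed.

Lemma syt_row_le m T i p q : is_SYT m T -> p <= q -> q < size (nth [::] T i) ->
  nth 0 (nth [::] T i) p <= nth 0 (nth [::] T i) q.
Proof.
move=> H; rewrite leq_eqVlt => /orP[/eqP -> //|Hlt] Hq.
by apply: ltnW; apply: (syt_row H).
Qed.

Lemma syt_consec m T k : is_SYT m T -> 0 < k -> k < m ->
  (rowof T k < rowof T k.+1) = (colof T k.+1 <= colof T k).
Proof.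
move=> H Hk Hkm.
have Hk1 : k \in flatten T by rewrite (syt_mem _ H); lia.
have Hk2 : k.+1 \in flatten T by rewrite (syt_mem _ H); lia.
have [Hi Hp Hx] := syt_pos H Hk1.
have [Hi' Hq Hy] := syt_pos H Hk2.
have c1 : 0 < colof T k by [].
have c2 : 0 < colof T k.+1 by [].
set i := rowof T k in Hi Hp Hx *; set i' := rowof T k.+1 in Hi' Hq Hy *.
set p := (colof T k).-1 in Hp Hx; set q := (colof T k.+1).-1 in Hq Hy.
have ep : colof T k = p.+1 by rewrite /p; lia.
have eq' : colof T k.+1 = q.+1 by rewrite /q; lia.
rewrite ep eq' ltnS; apply/idP/idP => Hc.
  rewrite leqNgt; apply/negP => Hpq.
  have Hpi' : p < size (nth [::] T i') by lia.
  have := syt_col H Hc Hi' Hpi'; rewrite Hx => h1.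
  have := syt_row H Hpq Hq; rewrite Hy => h2; lia.
rewrite ltnNge; apply/negP => Hii.
have Hqi : q < size (nth [::] T i) by lia.
have := syt_col_le H Hii Hi Hqi; rewrite Hy => h1.
have := syt_row_le H Hc Hp; rewrite Hx => h2; lia.
Qed.

Definition K (T : tableau) j := count (fun row => j <= size row) T.

Lemma syt_K m T i j : is_SYT m T -> i < size T ->
  (i < K T j) = (j <= size (nth [::] T i)).
Proof.
case=> _ Hs _ _ _ Hi.
have gt : transitive geq by move=> a b c; rewrite /geq /=; lia.
have := @sorted_nth_count _ 0 geq (fun x => j <= x) _ i gt Hs.
rewrite /shape (nth_map [::]) // => h; rewrite h; first by rewrite /K count_map.
  by move=> a b _ _; rewrite /geq /=; lia.
by rewrite size_map.
Qed.

Lemma K_size T j : K T j <= size T.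
Proof. exact: count_size. Qed.

Lemma K_mono T j j' : j <= j' -> K T j' <= K T j.
Proof. by move=> H; apply: sub_count => row /=; lia. Qed.

Lemma size_colseq m T : size (colseq m T) = m.
Proof. by rewrite size_map size_iota. Qed.

Lemma ent_colseq m T x : 0 < x <= m -> ent (colseq m T) x = colof T x.
Proof.
move=> Hx; rewrite /ent /colseq (nth_map 0) ?size_iota; last lia.
by rewrite nth_iota; [congr colof; lia | lia].
Qed.

Lemma syt_cols m T j : is_SYT m T -> 0 < j ->
  cols (colseq m T) j = [seq nth 0 (nth [::] T i) j.-1 | i <- iota 0 (K T j)].
Proof.
move=> H Hj.
apply: (irr_sorted_eq ltn_trans ltnn (sorted_cols _ _)).
  apply: sorted_map_iota => k _ Hk.
  have Hk1 : k.+1 < size T by have := K_size T j; lia.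
  apply: (syt_col H) => //.
  have Hj' : j <= size (nth [::] T k.+1) by rewrite -(syt_K _ H Hk1); lia.
  lia.
move=> x; rewrite mem_cols size_colseq.
apply/idP/mapP.
  move=> /andP[Hx /eqP]; rewrite ent_colseq // => Hc.
  have Hxf : x \in flatten T by rewrite (syt_mem _ H).
  have [Hi Hp Hxe] := syt_pos H Hxf.
  exists (rowof T x); last by rewrite -Hc.
  rewrite mem_iota /=; have := syt_K j H Hi; lia.
move=> [i]; rewrite mem_iota /= => Hi ->.
have HiT : i < size T by have := K_size T j; lia.
have Hjs : j <= size (nth [::] T i) by rewrite -(syt_K _ H).
have Hxf : nth 0 (nth [::] T i) j.-1 \in flatten T.
  by apply/mem_flatten_nth; exists i; apply: mem_nth; case: (j) Hj Hjs.
have Hx := Hxf; rewrite (syt_mem _ H) in Hx; rewrite Hx /=.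
have Hjp : j.-1 < size (nth [::] T i) by case: (j) Hj Hjs.
rewrite ent_colseq //; have [_ ->] := syt_at H HiT Hjp.
by apply/eqP; case: (j) Hj.
Qed.

Lemma syt_cnt m T j : is_SYT m T -> 0 < j -> cnt (colseq m T) j = K T j.
Proof. by move=> H Hj; rewrite -size_cols (syt_cols H Hj) size_map size_iota. Qed.

Lemma cnt0_colseq m T : cnt (colseq m T) 0 = 0.
Proof.
apply/count_memPn; apply/mapP => -[x _]; by rewrite /colof.
Qed.

Definition lattice d c := forall k j, 0 < j < d -> cnt (take k c) j.+1 <= cnt (take k c) j.

Lemma cnt_take_le c k j : cnt (take k c) j <= cnt c j.
Proof. by rewrite /cnt -{2}(cat_take_drop k c) count_cat; apply: leq_addr. Qed.

Lemma lattice_of_rowinc d c :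
  (forall j, 0 < j < d -> cnt c j.+1 <= cnt c j /\
     forall i, i < cnt c j.+1 -> nth 0 (cols c j) i < nth 0 (cols c j.+1) i) ->
  lattice d c.
Proof.
move=> H k j Hj; have [H1 H2] := H j Hj.
case Ha: (cnt (take k c) j.+1) => [|a] //.
have Ha1 : a < cnt c j.+1 by have := cnt_take_le c k j.+1; lia.
have Hy : nth 0 (cols c j.+1) a <= k by rewrite nth_cols_le // Ha.
have Hz : nth 0 (cols c j) a <= k by apply: ltnW; apply: leq_trans (H2 a Ha1) Hy.
by rewrite nth_cols_le in Hz; lia.
Qed.

Lemma rowinc_of_lattice d c j : lattice d c -> 0 < j < d ->
  cnt c j.+1 <= cnt c j /\
  forall i, i < cnt c j.+1 -> nth 0 (cols c j) i < nth 0 (cols c j.+1) i.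
Proof.
move=> Hl Hj.
have H1 : cnt c j.+1 <= cnt c j by have := Hl (size c) j Hj; rewrite take_size.
split => // i Hi.
set y := nth 0 (cols c j.+1) i.
have Hy : i < cnt (take y c) j.+1 by rewrite -nth_cols_le.
have Hy' : i < cnt (take y c) j by have := Hl y j Hj; lia.
have Hi' : i < cnt c j by lia.
rewrite -nth_cols_le // in Hy'.
rewrite ltn_neqAle Hy' andbT; apply/eqP => E.
have [_ E1] := nth_cols_prop Hi'; have [_ E2] := nth_cols_prop Hi.
by move: E1; rewrite E -/y E2; lia.
Qed.

Lemma syt_lattice m d T : is_SYT m T -> lattice d (colseq m T).
Proof.
move=> H; apply: lattice_of_rowinc => j Hj.
rewrite !syt_cnt //; try lia.
split; first by apply: K_mono.
move=> i Hi.
have HiT : i < size T by have := K_size T j.+1; lia.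
have Hjs : j.+1 <= size (nth [::] T i) by rewrite -(syt_K _ H).
have Hi2 : i < K T j by have := K_mono T (leqnSn j); lia.
rewrite !syt_cols //; try lia.
rewrite !(nth_map 0) ?size_iota // !nth_iota //= add0n.
by apply: (syt_row H) => //; lia.
Qed.

Definition rowlen d c i := count (fun j => i < cnt c j) (iota 1 d).
Definition recon d c : tableau :=
  [seq [seq nth 0 (cols c j) i | j <- iota 1 (rowlen d c i)] | i <- iota 0 (cnt c 1)].

Lemma cnt_decr d c j j' : lattice d c -> 0 < j -> j <= j' -> j' <= d ->
  cnt c j' <= cnt c j.
Proof.
move=> Hl Hj Hjj; rewrite -(subnKC Hjj); move: (j' - j) => k.
elim: k => [|k IH] Hk; first by rewrite addn0.
have Hk' : 0 < j + k < d by lia.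
have [H1 _] := rowinc_of_lattice Hl Hk'.
by rewrite addnS; apply: leq_trans H1 (IH _); lia.
Qed.

Lemma rowlen_spec d c i j : lattice d c -> 0 < j <= d ->
  (i < cnt c j) = (j <= rowlen d c i).
Proof.
move=> Hl Hj; apply: (count_iota_prefix (P := fun j => i < cnt c j)) => //.
move=> a b Ha Hab Hb /= Hi; apply: leq_trans Hi _; exact: (cnt_decr Hl).
Qed.

Lemma rowlen_le d c i : rowlen d c i <= d.
Proof. by rewrite /rowlen; have := count_size (fun j => i < cnt c j) (iota 1 d); rewrite size_iota. Qed.

Lemma size_recon d c : size (recon d c) = cnt c 1.
Proof. by rewrite size_map size_iota. Qed.

Lemma nth_recon d c i : i < cnt c 1 ->
  nth [::] (recon d c) i = [seq nth 0 (cols c j) i | j <- iota 1 (rowlen d c i)].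
Proof. by move=> Hi; rewrite (nth_map 0) ?size_iota // nth_iota. Qed.

Lemma size_nth_recon d c i : i < cnt c 1 -> size (nth [::] (recon d c) i) = rowlen d c i.
Proof. by move=> Hi; rewrite nth_recon // size_map size_iota. Qed.

Lemma nth_nth_recon d c i p : i < cnt c 1 -> p < rowlen d c i ->
  nth 0 (nth [::] (recon d c) i) p = nth 0 (cols c p.+1) i.
Proof. by move=> Hi Hp; rewrite nth_recon // (nth_map 0) ?size_iota // nth_iota. Qed.

Lemma recon_valid d c i p : lattice d c -> p < rowlen d c i -> i < cnt c p.+1.
Proof. by move=> Hl Hp; rewrite (rowlen_spec _ Hl) //; have := rowlen_le d c i; lia. Qed.

Lemma recon_mem d c i x : lattice d c -> x \in nth [::] (recon d c) i ->
  [/\ i < cnt c 1, i = index x (cols c (ent c x)), 0 < x <= size c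
    & i < cnt c (ent c x)].
Proof.
move=> Hl; case: (ltnP i (cnt c 1)) => Hi; last by rewrite nth_default // size_recon.
rewrite nth_recon // => /mapP [j]; rewrite mem_iota => Hj ->.
have Hv : i < cnt c j by rewrite (rowlen_spec _ Hl); have := rowlen_le d c i; lia.
have [Hr Hen] := nth_cols_prop Hv.
by rewrite Hen index_uniq ?size_cols // (sorted_uniq ltn_trans ltnn (sorted_cols _ _)).
Qed.

Lemma ent_range d c x : all (fun x => 0 < x <= d) c -> 0 < x <= size c ->
  0 < ent c x <= d.
Proof.
move=> Hc Hx; apply: (allP Hc); rewrite /ent; apply: mem_nth; have : x.-1 < size c by lia. exact.
Qed.

Lemma recon_SYT d c : 0 < d -> all (fun x => 0 < x <= d) c -> lattice d c ->
  is_SYT (size c) (recon d c).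
Proof.
move=> Hd Hc Hl.
have Hrs : forall i, sorted ltn (nth [::] (recon d c) i).
  move=> i; case: (ltnP i (cnt c 1)) => Hi; last by rewrite nth_default // size_recon.
  rewrite nth_recon //; apply: sorted_map_iota => k Hk1 Hk2.
  have Hkd : k < d by have := rowlen_le d c i; lia.
  have Hv : i < cnt c k.+1 by rewrite (rowlen_spec _ Hl); lia.
  have Hk0 : 0 < k < d by lia.
  have [_ H2] := rowinc_of_lattice Hl Hk0.
  exact: H2.
split.
- apply/allP => row /mapP [i]; rewrite mem_iota => Hi ->.
  rewrite size_map size_iota -(rowlen_spec _ Hl); lia.
- rewrite /Defs.shape /recon -map_comp; apply: sorted_map_iota => k _ _ /=.
  rewrite !size_map !size_iota /geq /=; apply: sub_count => j /=; lia.
- apply: uniq_perm; last first.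
  + move=> x; rewrite mem_iota; apply/idP/idP.
      move/mem_flatten_nth => [i /(recon_mem Hl) [_ _ ? _]]; lia.
    move=> Hx; have Hx' : 0 < x <= size c by lia.
    set j := ent c x; have Hj : 0 < j <= d by exact: ent_range.
    have Hxc : x \in cols c j by rewrite mem_cols Hx' eqxx.
    set i := index x (cols c j).
    have Hi : i < cnt c j by rewrite -size_cols index_mem.
    have Hi1 : i < cnt c 1 by apply: leq_trans Hi _; apply: (cnt_decr Hl); lia.
    have Hjr : j <= rowlen d c i by rewrite -(rowlen_spec _ Hl).
    apply/mem_flatten_nth; exists i.
    have <- : nth 0 (nth [::] (recon d c) i) j.-1 = x.
      by rewrite nth_nth_recon //; try lia; rewrite (_ : j.-1.+1 = j) ?nth_index //; lia.
    by apply: mem_nth; rewrite size_nth_recon //; lia.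
  + exact: iota_uniq.
  + apply/flatten_uniqP; split.
      by move=> i; exact: (sorted_uniq ltn_trans ltnn (Hrs i)).
    move=> i i' x /(recon_mem Hl) [_ -> _ _] /(recon_mem Hl) [_ -> _ _] //.
- apply/allP => row /mapP [i]; rewrite mem_iota => Hi ->.
  have Hi1 : i < cnt c 1 by lia.
  by have := Hrs i; rewrite nth_recon.
- move=> i j.
  case: (ltnP i.+1 (cnt c 1)) => Hi; last by rewrite nth_default // size_recon.
  rewrite size_nth_recon // => Hj.
  have Hv1 : i.+1 < cnt c j.+1 by exact: (recon_valid Hl Hj).
  have Hj' : j < rowlen d c i.
    by rewrite -(rowlen_spec _ Hl); [lia | have := rowlen_le d c i.+1; lia].
  rewrite !nth_nth_recon //; try lia.
  apply: (sorted_ltn_nth ltn_trans 0 (sorted_cols c j.+1)); rewrite ?inE ?size_cols //; lia.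
Qed.

Lemma recon_inT d c : 0 < d -> all (fun x => 0 < x <= d) c -> lattice d c ->
  in_T (size c) d (recon d c).
Proof.
move=> Hd Hc Hl; split; first exact: recon_SYT.
by apply/allP => row /mapP [i _ ->]; rewrite size_map size_iota rowlen_le.
Qed.

Lemma recon_colseq d c : 0 < d -> all (fun x => 0 < x <= d) c -> lattice d c ->
  colseq (size c) (recon d c) = c.
Proof.
move=> Hd Hc Hl; have HS := recon_SYT Hd Hc Hl.
rewrite /colseq; transitivity (map (ent c) (iota 1 (size c))); last by rewrite map_ent_iota // take_size.
apply/eq_in_map => x.
rewrite mem_iota => Hx; have Hx' : 0 < x <= size c by lia.
set j := ent c x; have Hj : 0 < j <= d by exact: ent_range.
have Hxc : x \in cols c j by rewrite mem_cols Hx' eqxx.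
set i := index x (cols c j).
have Hi : i < cnt c j by rewrite -size_cols index_mem.
have Hi1 : i < cnt c 1 by apply: leq_trans Hi _; apply: (cnt_decr Hl); lia.
have Hjr : j <= rowlen d c i by rewrite -(rowlen_spec _ Hl).
have Hjp : j.-1 < rowlen d c i by lia.
have Ex : nth 0 (nth [::] (recon d c) i) j.-1 = x.
  by rewrite nth_nth_recon // (_ : j.-1.+1 = j) ?nth_index //; lia.
have HiS : i < size (recon d c) by rewrite size_recon.
have HjS : j.-1 < size (nth [::] (recon d c) i) by rewrite size_nth_recon.
have := syt_at HS HiS HjS; rewrite Ex => -[_ ->]; lia.
Qed.

Lemma shape_recon d c : Defs.shape (recon d c) = map (rowlen d c) (iota 0 (cnt c 1)).
Proof. by rewrite /Defs.shape /recon -map_comp; apply: eq_map => i /=; rewrite size_map size_iota. Qed.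

Lemma syt_recon m d T : in_T m d T -> T = recon d (colseq m T).
Proof.
move=> [H Hd]; have HS := H; case: HS => Hne _ _ _ _.
set c := colseq m T.
have Hcnt : forall j, 0 < j -> cnt c j = K T j by move=> j Hj; apply: (syt_cnt H).
apply: (@eq_from_nth _ [::]).
  rewrite size_recon Hcnt //; apply/eqP; rewrite eq_sym -all_count.
  by apply: sub_all Hne => row.
move=> i Hi.
have Hne' : 0 < size (nth [::] T i) by apply: (allP Hne); apply: mem_nth.
have Hi1 : i < cnt c 1 by rewrite Hcnt // (syt_K _ H).
have Hsd : size (nth [::] T i) <= d by apply: (allP Hd); apply: mem_nth.
have Hrl : rowlen d c i = size (nth [::] T i).
  rewrite /rowlen -(count_iota_le Hsd); apply: eq_in_count => j.
  by rewrite mem_iota => Hj /=; rewrite Hcnt ?(syt_K _ H) //; lia.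
apply: (@eq_from_nth _ 0); first by rewrite size_nth_recon // Hrl.
move=> p Hp; rewrite nth_nth_recon ?Hrl // syt_cols //.
have HiK : i < K T p.+1 by rewrite (syt_K _ H).
by rewrite (nth_map 0) ?size_iota // nth_iota.
Qed.

Lemma coord_mapcat (a b : seq nat) j :
  Defs.coord ([seq (x, true) | x <- a] ++ [seq (x, false) | x <- b]) j =
  ((cnt a j)%:Z - (cnt b j)%:Z)%R.
Proof.
rewrite /Defs.coord !count_cat !count_map.
have -> : count (preim (fun x => (x, true)) (fun st => (st.1 == j) && st.2)) a = cnt a j.
  by apply: eq_count => x /=; rewrite andbT.
have -> : count (preim (fun x => (x, false)) (fun st => (st.1 == j) && st.2)) b = 0.
  by rewrite (eq_count (a2 := pred0)) ?count_pred0 // => x /=; rewrite andbF.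
have -> : count (preim (fun x => (x, true)) (fun st => (st.1 == j) && ~~ st.2)) a = 0.
  by rewrite (eq_count (a2 := pred0)) ?count_pred0 // => x /=; rewrite andbF.
have -> : count (preim (fun x => (x, false)) (fun st => (st.1 == j) && ~~ st.2)) b = cnt b j.
  by apply: eq_count => x /=; rewrite andbT.
by rewrite addn0 add0n.
Qed.

Lemma coord_take (a b : seq nat) k j :
  Defs.coord (take k (steps (a, b))) j =
  ((cnt (take k a) j)%:Z - (cnt (take (k - size a) b) j)%:Z)%R.
Proof.
rewrite /steps /= take_cat size_map; case: ifP => Hk.
  have -> : k - size a = 0 by lia.
  by rewrite -map_take take0; have := coord_mapcat (take k a) [::] j; rewrite /= cats0 => ->.
have Hk2 : size a <= k by rewrite leqNgt Hk.
rewrite -map_take coord_mapcat. rewrite (take_oversize Hk2). done.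
Qed.

Lemma coord_full (a b : seq nat) j :
  Defs.coord (steps (a, b)) j = ((cnt a j)%:Z - (cnt b j)%:Z)%R.
Proof. by rewrite /steps coord_mapcat. Qed.

Lemma size_steps (w : walk) : size (steps w) = size w.1 + size w.2.
Proof. by rewrite /steps size_cat !size_map. Qed.

Lemma K_shape T j : K T j = count (fun x => j <= x) (Defs.shape T).
Proof. by rewrite /Defs.shape count_map. Qed.

Lemma colseq_range m d T : in_T m d T -> all (fun x => 1 <= x <= d) (colseq m T).
Proof.
move=> [H Hd]; apply/allP => y /mapP [x]; rewrite mem_iota => Hx ->.
have Hxf : x \in flatten T by rewrite (syt_mem _ H); lia.
have [Hi Hp _] := syt_pos H Hxf.
have : size (nth [::] T (rowof T x)) <= d by apply: (allP Hd); apply: mem_nth.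
rewrite /colof /= in Hp *; lia.
Qed.

Lemma condT_iff n r m T : m = r * n -> is_SYT m T ->
  (condT n r T <-> block_decr n r (colseq m T)).
Proof.
move=> Hm H.
have key : forall i s, 1 <= i <= n -> 1 <= s < r ->
   (rowof T (r * (i - 1) + s) < rowof T (r * (i - 1) + s + 1)) =
   (ent (colseq m T) (r * (i - 1) + s + 1) <= ent (colseq m T) (r * (i - 1) + s)).
  move=> i s Hi Hs.
  have Hk : r * (i - 1) + s + 1 <= m.
    have h1 : r * i <= r * n by apply: leq_mul => //; lia.
    have h2 : r * (i - 1) + r = r * i.
      by case: (i) Hi => // i' _; rewrite subn1 /= mulnS addnC.
    lia.
  move: Hk; set t := r * (i - 1) => Hk.
  have Ha : 0 < t + s <= m by lia.
  have Hb : 0 < t + s + 1 <= m by lia.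
  rewrite !ent_colseq //.
  rewrite addn1; apply: (syt_consec H); lia.
by split => Hc i s Hi Hs; [rewrite -(key i s Hi Hs) | rewrite (key i s Hi Hs)]; apply: Hc.
Qed.

Lemma chamber_fact d (a b : seq nat) k j : stays_in_chamber d (a, b) ->
  k <= size a + size b -> 0 < j < d ->
  cnt (take k a) j.+1 + cnt (take (k - size a) b) j <=
  cnt (take k a) j + cnt (take (k - size a) b) j.+1.
Proof.
move=> Hst Hk Hj.
have Hk' : k <= size (steps (a, b)) by rewrite size_steps.
have := Hst k Hk' j Hj; rewrite !coord_take; lia.
Qed.

Unset Implicit Arguments.

Theorem corollary1 (n r d m : nat) :
  0 < n -> 0 < r -> 0 < d -> m = r * n ->
  [/\ (forall P Q : tableau, good_pair n r d m P Q -> good_walk n r d m (corr m P Q)),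
      (forall P Q P' Q' : tableau, good_pair n r d m P Q -> good_pair n r d m P' Q' ->
         corr m P Q = corr m P' Q' -> P = P' /\ Q = Q')
    & (forall w : walk, good_walk n r d m w ->
         exists P Q : tableau, good_pair n r d m P Q /\ corr m P Q = w)].
Proof.
move=> Hn Hr Hd Hm; split.
- move=> P Q [HP HQ Hsh HcP HcQ].
  have HPs := HP.1; have HQs := HQ.1.
  have Hcnt : forall j, cnt (colseq m P) j = cnt (colseq m Q) j.
    case=> [|j]; first by rewrite !cnt0_colseq.
    by rewrite (syt_cnt HPs) // (syt_cnt HQs) // !K_shape Hsh.
  split.
    exists (colseq m P, colseq m Q); split => //; split => /=.
    + by rewrite !size_colseq.
    + exact: colseq_range HP.
    + exact: colseq_range HQ.
    + by move=> j; rewrite coord_full Hcnt; lia.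
    + by split; apply/(condT_iff Hm).
  move=> k Hk j Hj.
  have lP := @syt_lattice _ d _ HPs; have lQ := @syt_lattice _ d _ HQs.
  rewrite /corr !coord_take size_colseq.
  rewrite size_steps /= size_rev !size_colseq in Hk.
  case: (leqP k m) => Hkm.
    have -> : k - m = 0 by lia.
    rewrite take0; have := lP k j Hj; rewrite /cnt /=; lia.
  rewrite take_oversize ?size_colseq; last lia.
  rewrite take_rev size_colseq !/cnt !count_rev.
  have := lQ (m - (k - m)) j Hj.
  have E : forall j', cnt (colseq m Q) j' =
     cnt (take (m - (k - m)) (colseq m Q)) j' + cnt (drop (m - (k - m)) (colseq m Q)) j'.
    by move=> j'; rewrite /cnt -count_cat cat_take_drop.
  have := E j; have := E j.+1; have := Hcnt j; have := Hcnt j.+1.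
  rewrite /cnt; lia.
- move=> P Q P' Q' [HP HQ _ _ _] [HP' HQ' _ _ _] [E1 E2].
  split; first by rewrite (syt_recon HP) (syt_recon HP') E1.
  by rewrite (syt_recon HQ) (syt_recon HQ') (can_inj revK E2).
move=> w [[[a b] [[[Hs1 Hs2] Hr1 Hr2 Ho [Hb1 Hb2]] ->]] Hst].
simpl in *.
have Hcnt : forall j, cnt a j = cnt b j.
  by move=> j; have := Ho j; rewrite coord_full; lia.
have Hch := @chamber_fact d a (rev b).
rewrite size_rev Hs1 Hs2 in Hch.
have la : lattice d a.
  move=> k j Hj.
  have E : take k a = take (minn k m) a.
    case: (leqP k m) => Hk //.
    by rewrite !take_oversize ?Hs1 //; lia.
  have Hkk : minn k m <= m + m by lia.
  have := Hch (minn k m) j Hst Hkk Hj.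
  rewrite E; have -> : minn k m - m = 0 by lia.
  by rewrite take0 /cnt /=; lia.
have lb : lattice d b.
  move=> k j Hj.
  set k0 := minn k m.
  have E : take k b = take k0 b.
    rewrite /k0; case: (leqP k m) => Hk //.
    by rewrite !take_oversize ?Hs2 //; lia.
  have Hk0 : k0 <= m by rewrite /k0 geq_minr.
  have Hkk : m + (m - k0) <= m + m by lia.
  have := Hch (m + (m - k0)) j Hst Hkk Hj.
  have -> : m + (m - k0) - m = m - k0 by lia.
  rewrite take_oversize ?Hs1; last lia.
  rewrite take_rev Hs2 (_ : m - (m - k0) = k0); last lia.
  rewrite /cnt !count_rev E.
  have E2 : forall j', cnt b j' = cnt (take k0 b) j' + cnt (drop k0 b) j'.
    by move=> j'; rewrite /cnt -count_cat cat_take_drop.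
  have := E2 j; have := E2 j.+1; have := Hcnt j; have := Hcnt j.+1.
  rewrite /cnt; lia.
have Ca : colseq m (recon d a) = a by rewrite -Hs1 recon_colseq.
have Cb : colseq m (recon d b) = b by rewrite -Hs2 recon_colseq.
exists (recon d a), (recon d b); split; last by rewrite /corr Ca Cb.
split.
- by rewrite -Hs1; apply: recon_inT.
- by rewrite -Hs2; apply: recon_inT.
- rewrite !shape_recon Hcnt; apply: eq_map => i.
  by apply: eq_count => j; rewrite Hcnt.
- apply/(condT_iff Hm); first by rewrite -Hs1; apply: recon_SYT.
  by rewrite Ca.
- apply/(condT_iff Hm); first by rewrite -Hs2; apply: recon_SYT.
  by rewrite Cb.
Qed.
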